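(* Let $n,a,t\in\mathbb N$ with $t<a<n$. Let $\mathcal F\subseteq\binom{[n]}{a}$ be an ideal of the partial order $\preceq_a$ and let $\mathcal G\subseteq\binom{[n]}{a}$. Then the following are equivalent: (a) $|F\cap G|\le t$ for all $F\in\mathcal F$, $G\in\mathcal G$; (b) $L_{t+1}(G)\not\preceq_{t+1}R_{t+1}(F)$ for all $F\in\mathcal F$ and $G\in\mathcal G$.
   Context: $[n]=\{1,\dots,n\}$, $\binom{[n]}{l}$ is the family of $l$-element subsets of $[n]$. For $X\subseteq[n]$ and $1\le i\le|X|$, $m(X,i)$ is the $i$-th smallest element of $X$. For $l\in[n]$, the partial order $\preceq_l$ on $\binom{[n]}{l}$ is defined by $X\preceq_l Y$ iff $m(X,i)\le m(Y,i)$ for all $1\le i\le l$. An ideal of a poset is a downward-closed subset. For $X\in\binom{[n]}{a}$ and $j\le a$, $L_j(X)=\{m(X,i):1\le i\le j\}$ (the $j$ smallest elements of $X$) and $R_j(X)=\{m(X,i):a-j+1\le i\le a\}$ (the $j$ largest elements of $X$). *)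

(* Defs.v *)
(* The ground set [n] = {1,...,n} is represented by 'I_n,
   the element x : 'I_n standing for the integer x+1. *)
From mathcomp Require Import all_boot.
Set Implicit Arguments. Unset Strict Implicit. Unset Printing Implicit Defensive.

Definition sseq n (X : {set 'I_n}) : seq nat :=
  sort leq [seq (val x).+1 | x <- enum X].

(* m(X,i): the i-th smallest element of X (1 <= i <= |X|) *)
Definition melt n (X : {set 'I_n}) (i : nat) : nat := nth 0 (sseq X) i.-1.

Definition precl (l : nat) n (X Y : {set 'I_n}) : bool :=
  [forall i : 'I_l, melt X i.+1 <= melt Y i.+1].

Definition lsets n (l : nat) (F : {set {set 'I_n}}) : bool :=
  F \subset [set X : {set 'I_n} | #|X| == l].

Definition is_ideal n (l : nat) (F : {set {set 'I_n}}) : Prop :=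
  lsets l F /\
  forall X Y : {set 'I_n}, #|X| = l -> Y \in F -> precl l X Y -> X \in F.

Definition Lj n (j : nat) (X : {set 'I_n}) : {set 'I_n} :=
  [set x : 'I_n | has (fun i => (val x).+1 == melt X i) (iota 1 j)].

Definition Rj n (j : nat) (X : {set 'I_n}) : {set 'I_n} :=
  [set x : 'I_n | has (fun i => (val x).+1 == melt X i) (iota (#|X| - j).+1 j)].

(* Main.v *)
Require Import Defs.
From mathcomp Require Import all_boot.
From mathcomp Require Import zify.
Set Implicit Arguments. Unset Strict Implicit. Unset Printing Implicit Defensive.

Definition cnt n (Z : {set 'I_n}) (v : nat) : nat :=
  count (fun x : 'I_n => val x < v) (enum Z).

Section S.
Variable n : nat.
Implicit Types Z X Y : {set 'I_n}.

Lemma cnt0 Z : cnt Z 0 = 0.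
Proof. by rewrite /cnt (eq_count (a2 := pred0)) ?count_pred0. Qed.

Lemma cnt_ge Z v : n <= v -> cnt Z v = #|Z|.
Proof.
move=> Hv; rewrite /cnt cardE -(count_predT (enum Z)).
apply: eq_count => y /=; exact: leq_trans (ltn_ord y) Hv.
Qed.

Lemma cnt_le_card Z v : cnt Z v <= #|Z|.
Proof. by rewrite /cnt cardE count_size. Qed.

Lemma cntS Z (x : 'I_n) : cnt Z (val x).+1 = cnt Z x + (x \in Z).
Proof.
rewrite /cnt.
have -> : count (fun y : 'I_n => val y < (val x).+1) (enum Z) =
          count (predU (fun y : 'I_n => val y < x) (pred1 x)) (enum Z).
  by apply: eq_count => y; rewrite /= ltnS leq_eqVlt orbC.
have := count_predUI (fun y : 'I_n => val y < x) (pred1 x) (enum Z).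
rewrite (eq_count (a1 := predI _ _) (a2 := pred0)); last first.
  by move=> y /=; case: eqP => [->|]; rewrite ?ltnn ?andbF.
rewrite count_pred0 addn0 => ->.
by rewrite count_uniq_mem ?enum_uniq // mem_enum.
Qed.

Lemma cnt_stepP v :
  (exists2 o : 'I_n, val o = v & forall Z, cnt Z v.+1 = cnt Z v + (o \in Z))
  \/ (n <= v /\ forall Z, cnt Z v.+1 = cnt Z v).
Proof.
case: (ltnP v n) => Hv.
  by left; exists (Ordinal Hv) => // Z; rewrite -(cntS Z (Ordinal Hv)).
by right; split => // Z; rewrite !cnt_ge // ltnW.
Qed.

Lemma sorted_nth_le (s : seq nat) i v : sorted leq s -> i < size s ->
  (nth 0 s i <= v) = (i < count (fun y => y <= v) s).
Proof.
elim: s i => [|x s IH] i //= Hs Hi.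
have Hall : all (leq x) s by exact: order_path_min leq_trans Hs.
have Hc0 : v < x -> count (fun y => y <= v) s = 0.
  move=> Hxv; rewrite (eq_in_count (a2 := pred0)) ?count_pred0 //.
  move=> y Hy /=; move/allP: Hall => /(_ y Hy) Hxy.
  by apply/negbTE; rewrite -ltnNge (leq_trans Hxv).
case: i Hi => [|i] Hi /=.
  case: (leqP x v) => Hxv //=; by rewrite Hc0.
rewrite IH ?(path_sorted Hs) //.
case: (leqP x v) => Hxv /=; first by rewrite add1n ltnS.
rewrite Hc0 //.
Qed.

Lemma size_sseq Z : size (sseq Z) = #|Z|.
Proof. by rewrite /sseq size_sort size_map cardE. Qed.

Lemma melt_le Z i v : 0 < i -> i <= #|Z| -> (melt Z i <= v) = (i <= cnt Z v).
Proof.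
move=> Hi HiZ; rewrite /melt sorted_nth_le ?size_sseq;
  last by rewrite prednK. 2: exact: (sort_sorted leq_total).
rewrite /sseq count_sort count_map prednK //.
Qed.

Lemma melt_eq Z i (x : 'I_n) : 0 < i ->
  (melt Z i == (val x).+1) = (x \in Z) && (cnt Z (val x).+1 == i).
Proof.
move=> Hi; case: (leqP i #|Z|) => HiZ.
  rewrite eqn_leq ltnNge !melt_le // cntS.
  case: (x \in Z) => /=; lia.
have -> : melt Z i = 0 by rewrite /melt nth_default // size_sseq -ltnS prednK.
have := cnt_le_card Z (val x).+1; case: (x \in Z) => //= H.
by apply/esym/negbTE; rewrite neq_ltn (leq_ltn_trans H HiZ).
Qed.

Lemma has_iota m k (x : 'I_n) Z : 0 < m ->
  has (fun i => (val x).+1 == melt Z i) (iota m k) =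
  (x \in Z) && (m <= cnt Z (val x).+1 < m + k).
Proof.
move=> Hm.
rewrite (eq_in_has (a2 := fun i => (x \in Z) && (i == cnt Z (val x).+1))).
  case: (x \in Z) => /=; first by rewrite has_pred1 mem_iota.
  by rewrite has_pred0.
move=> i; rewrite mem_iota => /andP[Hi _].
by rewrite eq_sym melt_eq ?(leq_trans Hm Hi) // [i == _]eq_sym.
Qed.

Lemma LjE j Y : Lj j Y = [set x in Y | cnt Y (val x).+1 <= j].
Proof.
apply/setP => x; rewrite !inE has_iota // cntS.
case: (x \in Y) => //=; lia.
Qed.

Lemma RjE j X : j <= #|X| -> Rj j X = [set x in X | #|X| - j < cnt X (val x).+1].
Proof.
move=> Hj; apply/setP => x; rewrite !inE has_iota //.
have := cnt_le_card X (val x).+1.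
case: (x \in X) => //=; lia.
Qed.

Lemma cntLE j Z v : cnt [set x in Z | cnt Z (val x).+1 <= j] v = minn (cnt Z v) j.
Proof.
elim: v => [|v IH]; first by rewrite !cnt0 ?min0n ?sub0n.
case: (cnt_stepP v) => [[o Ho Hs] | [Hv Hs]]; rewrite !Hs //.
rewrite inE Ho Hs IH; case: (o \in Z) => /=; lia.
Qed.

Lemma cntRE k Z v : cnt [set x in Z | k < cnt Z (val x).+1] v = cnt Z v - k.
Proof.
elim: v => [|v IH]; first by rewrite !cnt0 ?min0n ?sub0n.
case: (cnt_stepP v) => [[o Ho Hs] | [Hv Hs]]; rewrite !Hs //.
rewrite inE Ho Hs IH; case: (o \in Z) => /=; lia.
Qed.

Lemma cntC Z v : cnt (~: Z) v + cnt Z v = minn v n.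
Proof.
elim: v => [|v IH]; first by rewrite !cnt0 ?min0n ?sub0n.
case: (cnt_stepP v) => [[o Ho Hs] | [Hv Hs]]; rewrite !Hs.
  have := ltn_ord o; rewrite Ho inE; case: (o \in Z) => /=; lia.
lia.
Qed.

Lemma cntD X Y v : cnt X v <= cnt (X :\: Y) v + cnt Y v.
Proof.
elim: v => [|v IH]; first by rewrite !cnt0 ?min0n ?sub0n.
case: (cnt_stepP v) => [[o Ho Hs] | [Hv Hs]]; rewrite !Hs //.
rewrite inE; case: (o \in X); case: (o \in Y) => /=; lia.
Qed.

Lemma cntU (L : {set 'I_n}) k v :
  cnt (L :|: [set x in ~: L | cnt (~: L) (val x).+1 <= k]) v =
  cnt L v + minn (cnt (~: L) v) k.
Proof.
elim: v => [|v IH]; first by rewrite !cnt0 ?min0n ?sub0n.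
case: (cnt_stepP v) => [[o Ho Hs] | [Hv Hs]]; rewrite !Hs //.
rewrite !inE Ho Hs IH inE; case: (o \in L) => /=; lia.
Qed.

Lemma precl_cnt l X Y : precl l X Y -> l <= #|X| -> l <= #|Y| ->
  forall v, minn (cnt Y v) l <= cnt X v.
Proof.
move=> /forallP H HX HY v.
have Hml : minn (cnt Y v) l <= l := geq_minr _ _.
have Hmc : minn (cnt Y v) l <= cnt Y v := geq_minl _ _.
move: Hml Hmc; case: (minn (cnt Y v) l) => [//|m] Hml Hmc.
have := H (Ordinal Hml) => /= HXY.
have HYm : melt Y m.+1 <= v by rewrite melt_le // (leq_trans Hml HY).
by rewrite -melt_le // ?(leq_trans HXY HYm) // (leq_trans Hml HX).
Qed.

Lemma cnt_precl l X Y : (forall v, minn (cnt Y v) l <= cnt X v) ->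
  l <= #|X| -> l <= #|Y| -> precl l X Y.
Proof.
move=> H HX HY; apply/forallP => i.
have Hi : i.+1 <= l := ltn_ord i.
rewrite melt_le // ?(leq_trans Hi HX) //.
apply: leq_trans (H _); rewrite leq_min Hi andbT.
by rewrite -melt_le // (leq_trans Hi HY).
Qed.

Lemma cnt_card Z : cnt Z n = #|Z|.
Proof. exact: cnt_ge. Qed.

End S.

Theorem lemma3 (n a t : nat) (F G : {set {set 'I_n}}) :
  t < a -> a < n ->
  is_ideal a F -> lsets a G ->
  ((forall X Y, X \in F -> Y \in G -> #|X :&: Y| <= t) <->
   (forall X Y, X \in F -> Y \in G -> ~~ precl t.+1 (Lj t.+1 Y) (Rj t.+1 X))).
Proof.
move=> Hta Han [HF Hid] HG.
have cardF X : X \in F -> #|X| = a.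
  by move=> HX; move/subsetP: HF => /(_ X HX); rewrite inE => /eqP.
have cardG Y : Y \in G -> #|Y| = a.
  by move=> HY; move/subsetP: HG => /(_ Y HY); rewrite inE => /eqP.
split.
- move=> Ha X Y HX HY; apply/negP => Hp.
  have HXa := cardF X HX; have HYa := cardG Y HY.
  rewrite LjE RjE ?HXa // in Hp.
  set L := [set x in Y | cnt Y (val x).+1 <= t.+1] in Hp.
  have HL v : cnt L v = minn (cnt Y v) t.+1 by rewrite cntLE.
  have HR v : cnt [set x in X | a - t.+1 < cnt X (val x).+1] v
             = cnt X v - (a - t.+1) by rewrite cntRE.
  have cL : #|L| = t.+1 by rewrite -cnt_card HL cnt_card HYa; lia.
  have cR : #|[set x in X | a - t.+1 < cnt X (val x).+1]| = t.+1.
    by rewrite -cnt_card HR cnt_card HXa; lia.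
  have Hc := precl_cnt Hp (eq_leq (esym cL)) (eq_leq (esym cR)).
  set X' := L :|: [set x in ~: L | cnt (~: L) (val x).+1 <= a - t.+1].
  have HX' v : cnt X' v = cnt L v + minn (cnt (~: L) v) (a - t.+1) by rewrite cntU.
  have cX' : #|X'| = a.
    rewrite -cnt_card HX' !cnt_card cL.
    have := cntC L n; rewrite !cnt_card cL; lia.
  have HX'F : X' \in F.
    apply: (Hid X' X) => //; apply: cnt_precl; rewrite ?cX' ?HXa //.
    move=> v; rewrite HX'.
    have := Hc v; rewrite HR => Hv.
    have := cntC L v; have := cntC X v; have := cnt_le_card X v.
    rewrite HXa; lia.
  have := Ha X' Y HX'F HY.
  have : L \subset X' :&: Y.
    apply/subsetP => x Hx; rewrite inE; apply/andP; split.
      by rewrite inE Hx.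
    by move: Hx; rewrite inE => /andP[].
  move/subset_leq_card; rewrite cL; lia.
- move=> Hb X Y HX HY; rewrite leqNgt; apply/negP => Hs.
  have HXa := cardF X HX; have HYa := cardG Y HY.
  have := Hb X Y HX HY; rewrite LjE RjE ?HXa //; move/negP; apply.
  have cL : #|[set x in Y | cnt Y (val x).+1 <= t.+1]| = t.+1.
    by rewrite -cnt_card cntLE cnt_card HYa; lia.
  have cR : #|[set x in X | a - t.+1 < cnt X (val x).+1]| = t.+1.
    by rewrite -cnt_card cntRE cnt_card HXa; lia.
  apply: cnt_precl; rewrite ?cL ?cR //.
  move=> v; rewrite cntLE cntRE.
  have := cntD X Y v; have := cnt_le_card (X :\: Y) v.
  have := cardsD X Y; have := subset_leq_card (subsetIl X Y).
  rewrite HXa; lia.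
Qed.
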